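(* Let $X$ be a countable Markov shift over the alphabet $\mathbb N$, let $\phi\colon X\to\mathbb R$ be a measurable function, and assume there exists a Gibbs state for the potential $\phi$. Then $\sup\phi<\infty$, $\inf\phi=-\infty$, and $\sup_{n\ge1}D_n(\phi)<\infty$.
   Context: $\mathbb N=\{0,1,2,\dots\}$ with discrete topology; $A$ is a 0-1 matrix indexed by $\mathbb N$ with no zero row or column; $X=\{x\in\mathbb N^{\mathbb N}:A_{x_ix_{i+1}}=1\ \forall i\}$ with product topology and left shift $\sigma$. $E^n$ is the set of admissible strings $w_0\cdots w_{n-1}$ ($A_{w_iw_{i+1}}=1$ for consecutive letters), $[w]=\{x\in X:x_i=w_i,\ i<n\}$. $S_n\varphi=\sum_{i=0}^{n-1}\varphi\circ\sigma^i$. $D_n(\varphi)=\sup_{w\in E^n}\sup_{x,y\in[w]}(S_n\varphi(x)-S_n\varphi(y))$. A Borel probability measure $\mu_\phi$ on $X$ is a Gibbs state for $\phi$ if there are constants $c_0\ge1$, $P\in\mathbb R$ with $c_0^{-1}\le\mu_\phi[x_0,\dots,x_{n-1}]/\exp(-Pn+S_n\phi(x))\le c_0$ for all $n\ge1$, $x\in X$. *)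

(* Defs.v *)
From HB Require Import structures.
From mathcomp Require Import all_boot all_order all_algebra.
From mathcomp Require Import all_classical all_reals all_analysis.
Unset Printing Implicit Defensive.
Import Order.TTheory GRing.Theory Num.Theory.
Local Open Scope classical_set_scope.
Local Open Scope ring_scope.

(* A 0-1 matrix indexed by nat is A : nat -> nat -> bool (A a b = true <-> A_{ab} = 1). *)
Definition no_zero_row (A : nat -> nat -> bool) := forall a, exists b, A a b.
Definition no_zero_col (A : nat -> nat -> bool) := forall b, exists a, A a b.

Definition admissible (A : nat -> nat -> bool) (x : nat -> nat) : Prop :=
  forall i, A (x i) (x i.+1).

(* admissible words of length n, encoded as w : nat -> nat of which only
   w 0, ..., w (n-1) matter: E^n *)
Definition admissible_word (A : nat -> nat -> bool) (n : nat) (w : nat -> nat) : Prop :=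
  forall i, (i.+1 < n)%N -> A (w i) (w i.+1).

(* A canonical point of X, used only to equip X with a pointed structure
   (required by the library for measurable types). *)
Definition next_sym (A : nat -> nat -> bool) (hA : no_zero_row A) (a : nat) : nat :=
  ex_minn (hA a).

Lemma next_symP (A : nat -> nat -> bool) (hA : no_zero_row A) a : A a (next_sym A hA a).
Proof. by rewrite /next_sym; case: ex_minnP. Qed.

Definition pt_seq (A : nat -> nat -> bool) (hA : no_zero_row A) (i : nat) : nat :=
  iter i (next_sym A hA) 0.

Lemma pt_seq_adm (A : nat -> nat -> bool) (hA : no_zero_row A) : admissible A (pt_seq A hA).
Proof. by move=> i; rewrite /pt_seq iterS; exact: next_symP. Qed.

Definition shift_space (A : nat -> nat -> bool) (hA : no_zero_row A) : Type :=
  {x : nat -> nat | admissible A x}.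

HB.instance Definition _ {A} (hA : no_zero_row A) :=
  gen_eqMixin (shift_space A hA).
HB.instance Definition _ {A} (hA : no_zero_row A) :=
  gen_choiceMixin (shift_space A hA).
HB.instance Definition _ {A} (hA : no_zero_row A) :=
  isPointed.Build (shift_space A hA) (exist _ (pt_seq A hA) (pt_seq_adm A hA)).

(* The Borel sigma-algebra of X (product topology on N^N, N discrete, restricted
   to X) is generated by the cylinder sets {x in X | x_i = w_i, i < n}. *)
Definition cylinders {A} (hA : no_zero_row A) : set (set (shift_space A hA)) :=
  [set C | exists (n : nat) (w : nat -> nat),
     C = [set x | forall i, (i < n)%N -> proj1_sig x i = w i]].

Definition X {A} (hA : no_zero_row A) := g_sigma_algebraType (cylinders hA).

Definition coord {A} {hA : no_zero_row A} (x : X hA) (i : nat) : nat :=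
  proj1_sig x i.

Definition in_cyl {A} {hA : no_zero_row A} (n : nat) (w : nat -> nat) (x : X hA) : Prop :=
  forall i, (i < n)%N -> coord x i = w i.

Definition cylinder {A} (hA : no_zero_row A) (n : nat) (w : nat -> nat) : set (X hA) :=
  [set x | in_cyl n w x].

Lemma shift_adm (A : nat -> nat -> bool) (x : nat -> nat) : admissible A x -> admissible A (fun i => x i.+1).
Proof. by move=> h i; exact: h. Qed.

Definition lshift {A} {hA : no_zero_row A} (x : X hA) : X hA :=
  exist _ (fun i => proj1_sig x i.+1) (@shift_adm A _ (proj2_sig x)).

Definition Sn {R : realType} {A} {hA : no_zero_row A} (phi : X hA -> R) (n : nat) (x : X hA) : R :=
  \sum_(i < n) phi (iter i (@lshift A hA) x).

Definition gibbs_state {R : realType} {A} {hA : no_zero_row A} (phi : X hA -> R)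
  (mu : probability (X hA) R) : Prop :=
  exists (c0 P : R), 1 <= c0 /\
    forall (n : nat) (x : X hA), (1 <= n)%N ->
      ((c0^-1 * expR (- P * n%:R + Sn phi n x))%:E <= mu (cylinder hA n (coord x)))%E /\
      (mu (cylinder hA n (coord x)) <= (c0 * expR (- P * n%:R + Sn phi n x))%:E)%E.

(* Main.v *)
Require Import Defs.
From HB Require Import structures.
From mathcomp Require Import all_boot all_order all_algebra.
From mathcomp Require Import all_classical all_reals all_analysis.
From mathcomp Require Import lra.
Import Order.TTheory GRing.Theory Num.Theory.
Local Open Scope classical_set_scope.
Local Open Scope ring_scope.

Lemma cyl_meas {A} (hA : no_zero_row A) n w : measurable (cylinder hA n w).
Proof. apply: sub_sigma_algebra; exists n, w; by []. Qed.

Definition seq_from {A} (hA : no_zero_row A) (a : nat) (i : nat) : nat :=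
  iter i (next_sym A hA) a.

Lemma seq_from_adm {A} (hA : no_zero_row A) a : admissible A (seq_from hA a).
Proof. by move=> i; rewrite /seq_from iterS; exact: next_symP. Qed.

Definition pt_from {A} (hA : no_zero_row A) a : X hA :=
  exist _ (seq_from hA a) (seq_from_adm hA a).

Lemma Sn1 (R : realType) {A} (hA : no_zero_row A) (phi : X hA -> R) x : Sn phi 1 x = phi x.
Proof. by rewrite /Sn big_ord1. Qed.

Lemma cyl_eq {A} (hA : no_zero_row A) n (x y : X hA) w :
  in_cyl n w x -> in_cyl n w y -> cylinder hA n (Defs.coord x) = cylinder hA n (Defs.coord y).
Proof.
move=> hx hy; apply/funext => z; apply/propext; split => hz i hi.
  by rewrite hz // hx // hy.
by rewrite hz // hy // hx.
Qed.

Lemma aux_le {R : realType} {c e m : R} : 0 < c -> c^-1 * e <= m -> e <= c * m.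
Proof.
move=> c0 h; have -> : e = c * (c^-1 * e) by rewrite mulrA mulfV ?gt_eqF // mul1r.
by rewrite ler_pM2l.
Qed.

Theorem lemma2p2 (R : realType) (A : nat -> nat -> bool)
  (hrow : no_zero_row A) (hcol : no_zero_col A)
  (phi : X hrow -> R) (phi_meas : measurable_fun setT phi)
  (hgibbs : exists mu : probability (X hrow) R, gibbs_state phi mu) :
  (exists M : R, forall x, phi x <= M) /\
  (forall M : R, exists x, phi x < M) /\
  (exists C : R, forall n : nat, (1 <= n)%N ->
     forall w : nat -> nat, admissible_word A n w ->
     forall x y : X hrow, in_cyl n w x -> in_cyl n w y ->
       Sn phi n x - Sn phi n y <= C).
Proof.
case: hgibbs => mu [c0 [P [c01 hG]]].
have c0p : 0 < c0 by apply: lt_le_trans c01.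
have lower1 : forall x, c0^-1 * expR (- P + phi x) <= 1.
  move=> x; have [h1 _] := hG 1%N x isT.
  rewrite Sn1 mulr1 in h1.
  rewrite -lee_fin; apply: le_trans h1 _; apply: probability_le1; exact: cyl_meas.
split.
  exists (c0 + P - 1) => x.
  have := aux_le (R:=R) c0p (lower1 x); rewrite mulr1 => h.
  have := expR_ge1Dx (- P + phi x) => h2; lra.
split.
  move=> M.
  have [//|H] := pselect (exists x, phi x < M).
  have HM : forall x, M <= phi x.
    by move=> x; rewrite leNgt; apply/negP => hx; apply: H; exists x.
  pose d := c0^-1 * expR (- P + M).
  have dp : 0 < d by rewrite /d mulr_gt0 ?invr_gt0 ?expR_gt0.
  have cyla : forall a : nat, (d%:E <= mu (cylinder hrow 1 (Defs.coord (pt_from hrow a))))%E.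
    move=> a; have [h1 _] := hG 1%N (pt_from hrow a) isT.
    apply: le_trans h1; rewrite Sn1 mulr1 lee_fin /d ler_pM2l ?invr_gt0 //.
    by rewrite ler_expR lerD2l.
  pose U (K : nat) := [set z : X hrow | (Defs.coord z 0 < K)%N].
  have HU : forall K, measurable (U K) /\ ((K%:R * d)%:E <= mu (U K))%E.
    elim => [|K [mK IH]].
      have -> : U 0%N = set0 by apply/funext => z; apply/propext; split.
      by split => //; rewrite measure0 mul0r.
    have eU : U K.+1 = U K `|` cylinder hrow 1 (Defs.coord (pt_from hrow K)).
      apply/funext => z; apply/propext; rewrite /U /cylinder /in_cyl /=.
      split.
        rewrite ltnS leq_eqVlt => /orP [/eqP e|l]; [right|left] => //.
        by case=> // _; rewrite e.
      case=> [l|h]; first exact: ltnW.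
      by rewrite (h 0%N isT).
    split; rewrite eU; first by apply: measurableU => //; exact: cyl_meas.
    rewrite measureU //; last 2 first.
    - exact: cyl_meas.
    - apply/funext => z; apply/propext; split => //; rewrite /U /cylinder /in_cyl /=.
      by case => l h; move: l; rewrite (h 0%N isT) ltnn.
    rewrite -natr1 mulrDl mul1r EFinD; apply: leeD => //; exact: cyla.
  pose K := (Num.trunc d^-1).+1.
  have [mK hK] := HU K.
  have : ((K%:R * d)%:E <= 1)%E by apply: le_trans hK (probability_le1 _ mK).
  rewrite lee_fin.
  have := truncnS_gt d^-1; rewrite -/K => hK1.
  have : 1 < K%:R * d.
    by rewrite -(ltr_pdivrMr _ _ dp) div1r.
  by move=> a b; exfalso; move: (lt_le_trans a b); rewrite ltxx.
exists (c0 * c0) => n n1 w _ x y hx hy.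
have [lx _] := hG n x n1.
have [_ uy] := hG n y n1.
rewrite (@cyl_eq _ hrow _ _ _ _ hx hy) in lx.
have := le_trans lx uy; rewrite lee_fin => h.
have h2 := aux_le (R:=R) c0p h.
set a := - P * n%:R + Sn phi n x in h2.
set b := - P * n%:R + Sn phi n y in h2.
have : expR (a - b) <= c0 * c0.
  by rewrite expRD expRN ler_pdivrMr ?expR_gt0 // -mulrA.
move=> e2; have e1 := expR_ge1Dx (a - b).
have -> : Sn phi n x - Sn phi n y = a - b by rewrite /a /b opprD addrACA subrr add0r.
apply: le_trans e2; apply: le_trans e1; by rewrite lerDr.
Qed.
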